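(* Let $n\ge3$. Then the big height of $I(L_n^2)\subseteq\Bbbk[x_1,\dots,x_n]$ equals $n-\left\lceil\frac n5\right\rceil$.
   Context: $L_n^2$ is the graph on $\{1,\dots,n\}$ with edges $\{i,i+1\}$ ($1\le i\le n-1$) and $\{i,i+2\}$ ($1\le i\le n-2$). $I(G)=\langle x_ix_j:\{i,j\}\in E(G)\rangle$, $\Bbbk$ a field. The big height of an ideal is the maximum height of its minimal prime ideals. *)

(* Defs.v *)
From HB Require Import structures.
From mathcomp Require Import all_boot all_order all_algebra.
From mathcomp Require Import mpoly.
Set Implicit Arguments. Unset Strict Implicit. Unset Printing Implicit Defensive.
Import GRing.Theory.
Local Open Scope ring_scope.

Section CommAlg.
Variable R : comNzRingType.

Definition rsubset (I J : R -> Prop) := forall x, I x -> J x.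
Definition rsubsetneq (I J : R -> Prop) := rsubset I J /\ exists x, J x /\ ~ I x.
Definition rseteq (I J : R -> Prop) := forall x, I x <-> J x.

Definition is_ideal (I : R -> Prop) : Prop :=
  I 0 /\ (forall a b, I a -> I b -> I (a + b)) /\ (forall r a, I a -> I (r * a)).

Definition ideal_gen (G : R -> Prop) : R -> Prop :=
  fun x => forall J, is_ideal J -> rsubset G J -> J x.

Definition is_prime (P : R -> Prop) : Prop :=
  is_ideal P /\ ~ P 1 /\ (forall a b, P (a * b) -> P a \/ P b).

Definition is_minimal_prime (I P : R -> Prop) : Prop :=
  is_prime P /\ rsubset I P /\
  (forall Q, is_prime Q -> rsubset I Q -> rsubset Q P -> rseteq Q P).

Definition prime_chain_to (P : R -> Prop) (m : nat) : Prop :=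
  exists c : nat -> (R -> Prop),
    (forall i, (i <= m)%N -> is_prime (c i)) /\
    (forall i, (i < m)%N -> rsubsetneq (c i) (c i.+1)) /\
    rseteq (c m) P.

Definition height_eq (P : R -> Prop) (h : nat) : Prop :=
  prime_chain_to P h /\ (forall m, prime_chain_to P m -> (m <= h)%N).

Definition bigheight_eq (I : R -> Prop) (h : nat) : Prop :=
  (exists P, is_minimal_prime I P /\ height_eq P h) /\
  (forall P m, is_minimal_prime I P -> prime_chain_to P m -> (m <= h)%N).

End CommAlg.

(* The graph L_n^2 on vertices 'I_n (vertex i <-> x_{i+1}): edges {i,i+1}, {i,i+2}. *)
Definition L2_edge (n : nat) (i j : 'I_n) : Prop :=
  (val j = (val i).+1)%N \/ (val j = (val i).+2)%N.

Arguments L2_edge : clear implicits.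
Definition edge_ideal_L2 (k : fieldType) (n : nat) : {mpoly k[n]} -> Prop :=
  ideal_gen (fun p : {mpoly k[n]} =>
    exists i j : 'I_n, L2_edge n i j /\ p = 'X_i * 'X_j).
Arguments edge_ideal_L2 k n : clear implicits.

(* Main.v *)
Require Import Defs.
From HB Require Import structures.
From mathcomp Require Import all_boot all_order all_algebra.
From mathcomp Require Import mpoly.
From Stdlib Require Import ClassicalEpsilon Classical.
From mathcomp Require Import zify.
Set Implicit Arguments. Unset Strict Implicit. Unset Printing Implicit Defensive.
Import GRing.Theory.
Local Open Scope ring_scope.
Local Open Scope quotient_scope.

Section IdealFacts.
Variable R : comNzRingType.
Variable J : R -> Prop.
Hypothesis hJ : is_ideal J.
Lemma ideal0 : J 0. Proof. by case: hJ. Qed.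
Lemma idealD a b : J a -> J b -> J (a + b). Proof. by case: hJ => _ [h _]; apply: h. Qed.
Lemma idealM r a : J a -> J (r * a). Proof. by case: hJ => _ [_ h]; apply: h. Qed.
Lemma idealMr r a : J a -> J (a * r). Proof. by rewrite mulrC; apply: idealM. Qed.
Lemma idealN a : J a -> J (- a). Proof. by move=> h; rewrite -mulN1r; apply: idealM. Qed.
Lemma idealB a b : J a -> J b -> J (a - b). Proof. by move=> ha hb; apply: idealD => //; apply: idealN. Qed.
End IdealFacts.

Section Sig.
Variables (k : fieldType) (n : nat).
Local Notation R := {mpoly k[n]}.
Definition sh (T : {set 'I_n}) (i : 'I_n) : R := if i \in T then 'X_i else 0.
Definition sigm (T : {set 'I_n}) : {rmorphism R -> R} := mmap (@mpolyC n k) (sh T).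
Arguments sigm : simpl never.
Lemma rmorph_mpoly_ext (A : comNzRingType) (f g : {rmorphism R -> A}) :
  (forall c, f c%:MP = g c%:MP) -> (forall i, f 'X_i = g 'X_i) -> f =1 g.
Proof.
move=> hc hx p; rewrite (mpolyE p) !rmorph_sum; apply: eq_bigr => m _.
rewrite -mul_mpolyC !rmorphM hc mpolyXE_id !rmorph_prod; congr (_ * _); apply: eq_bigr => i _.
by rewrite !rmorphXn hx.
Qed.
Lemma sigC (T : {set 'I_n}) c : sigm T c%:MP = c%:MP.
Proof. exact: mmapC. Qed.
Lemma sigX (T : {set 'I_n}) i : sigm T 'X_i = if i \in T then 'X_i else 0.
Proof. exact: (etrans (mmapX _ _ _) (mmap1U _ _)). Qed.

Lemma sig_sub (S T : {set 'I_n}) p : S \subset T -> sigm T (sigm S p) = sigm S p.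
Proof.
move=> sST; have := @rmorph_mpoly_ext _ (sigm T \o sigm S) (sigm S).
apply => [c|i] /=; first by rewrite !sigC.
rewrite sigX.
case: ifP => iS; last by rewrite rmorph0.
by rewrite sigX (subsetP sST _ iS).
Qed.

Lemma sigXm (T : {set 'I_n}) m : sigm T 'X_[m] = if [forall i, (m i != 0)%N ==> (i \in T)] then 'X_[m] else 0.
Proof.
rewrite mpolyXE_id rmorph_prod; case: ifP => [/forallP h|/negbT].
  apply: eq_bigr => i _; rewrite rmorphXn sigX; case: ifP => // iT.
  by have := h i; rewrite iT implybF negbK => /eqP ->; rewrite !expr0.
rewrite negb_forall => /existsP [i]; rewrite negb_imply => /andP [mi iT].
rewrite (bigD1 i) //= rmorphXn sigX (negbTE iT) expr0n (negbTE mi) mul0r //.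
Qed.

Lemma sig_ideal (T : {set 'I_n}) (J : R -> Prop) : is_ideal J ->
  (forall i, i \notin T -> J 'X_i) -> forall p, J (p - sigm T p).
Proof.
move=> hJ hX; elim/mpolyind => [|c m p _ _ IH].
  by rewrite rmorph0 subr0; apply: ideal0.
rewrite rmorphD opprD addrACA; apply: (idealD hJ); last exact: IH.
rewrite -mul_mpolyC rmorphM sigC -mulrBr; apply: (idealM hJ).
rewrite sigXm; case: ifP => [_|/negbT]; first by rewrite subrr; apply: ideal0.
rewrite subr0 negb_forall => /existsP [i]; rewrite negb_imply => /andP [mi iT].
have -> : m = (U_(i) + (m - U_(i)))%MM by rewrite addmC submK // lep1mP.
by rewrite mpolyXD; apply: idealMr => //; apply: hX.
Qed.
End Sig.
Arguments sigm {k n}.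
Section Quot.
Variable R : comNzRingType.
Variable P : R -> Prop.
Hypothesis hP : is_prime P.
Definition Pb (x : R) : bool := if excluded_middle_informative (P x) then true else false.
Lemma PbP x : reflect (P x) (Pb x).
Proof. by rewrite /Pb; case: excluded_middle_informative => h; constructor. Qed.
Lemma Pb_closed : idealr_closed Pb.
Proof.
case: hP => [[h0 [hD hM]] [h1 _]]; split.
- by apply/PbP.
- by apply/PbP.
- by move=> a u v /PbP hu /PbP hv; apply/PbP; apply: hD => //; apply: hM.
Qed.
HB.instance Definition _ := isIdealr.Build R Pb Pb_closed.


Definition D := {ideal_quot (Pb : idealr R)}.
Definition piD : {rmorphism R -> D} := \pi_D.
Lemma piD0 x : piD x = 0 <-> P x.
Proof.
split => [/eqP|h].
  by rewrite -(rmorph0 piD) /piD /= piE /Quotient.equiv subr0 => /PbP.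
by rewrite -(rmorph0 piD) /piD /=; apply/eqP; rewrite piE /Quotient.equiv subr0; apply/PbP.
Qed.
Lemma piD_surj (z : D) : exists x, z = piD x.
Proof. by exists (repr z); rewrite /piD /= reprK. Qed.
Lemma D_dom (a b : D) : a * b = 0 -> a = 0 \/ b = 0.
Proof.
case: (piD_surj a) => x ->; case: (piD_surj b) => y ->.
rewrite -rmorphM => /piD0; case: hP => _ [_ hp] /hp [] h; [left|right]; exact/piD0.
Qed.
Lemma D_nontriv : (1 : D) != 0.
Proof. by apply/eqP; rewrite -(rmorph1 piD) => /piD0; case: hP => _ []. Qed.
End Quot.

Section LL.
Variables (k : fieldType) (n : nat).
Local Notation R := {mpoly k[n]}.
Definition Phi (S : {set 'I_n}) (j : 'I_n) : {rmorphism R -> {poly R}} :=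
  mmap ((@polyC R) \o (@mpolyC n k)) (fun i => if i == j then 'X else if i \in S then ('X_i)%:P else 0).
Lemma PhiC S j c : Phi S j c%:MP = (c%:MP)%:P.
Proof. exact: mmapC. Qed.
Lemma PhiX S j i : Phi S j 'X_i = if i == j then 'X else if i \in S then ('X_i)%:P else 0.
Proof. exact: (etrans (mmapX _ _ _) (mmap1U _ _)). Qed.
Lemma Phi_eval S j p : (Phi S j p).['X_j] = sigm (j |: S) p.
Proof.
have := @rmorph_mpoly_ext _ _ _ (horner_eval 'X_j \o Phi S j) (sigm (j |: S)).
apply => [c|i] /=; first by rewrite /horner_eval PhiC sigC hornerC.
rewrite /horner_eval PhiX sigX in_setU1; case: eqP => [->|_]; first by rewrite hornerX.
by case: ifP; rewrite ?hornerC.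
Qed.
Lemma Phi_coef S j p t : sigm S (Phi S j p)`_t = (Phi S j p)`_t.
Proof.
suff E : map_poly (sigm S) \o Phi S j =1 Phi S j by rewrite -coef_map -[in RHS](E p).
apply: rmorph_mpoly_ext => [c|i] /=.
  by rewrite PhiC map_polyC /= sigC.
rewrite PhiX; case: eqP => _; first by rewrite map_polyX.
case: ifP => iS; rewrite ?map_polyC /= ?sigX ?iS ?rmorph0 //.
Qed.
End LL.
Arguments Phi {k n}.

Section KeyLemma.
Variables (k : fieldType) (n : nat).
Local Notation R := {mpoly k[n]}.
Variables (P Q : R -> Prop) (hP : is_prime P) (hQ : is_prime Q).
Hypothesis hPQ : rsubset P Q.
Variables (q : R) (qQ : Q q) (qP : ~ P q).
Variable S : {set 'I_n}.
Hypothesis hS : forall p, sigm S p = p -> Q p -> p = 0.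
Variable F : 'I_n -> R.
Hypothesis hF : forall j, j \notin S -> [/\ sigm (j |: S) (F j) = F j, P (F j) & F j != 0].

Let G j := Phi S j (F j).
Let cc j := lead_coef (G j).
Local Notation DD := (D hP).
Let pi : {rmorphism R -> DD} := piD hP.
Let psi : {rmorphism R -> DD} := pi \o sigm S.
Lemma psiE x : psi x = pi (sigm S x). Proof. by []. Qed.

Lemma fixP0 p : sigm S p = p -> P p -> p = 0.
Proof. by move=> h1 h2; apply: hS => //; apply: hPQ. Qed.

Lemma G_eval j : j \notin S -> (G j).['X_j] = F j.
Proof. by move=> /hF [h _ _]; rewrite /G Phi_eval h. Qed.

Lemma G_size j : j \notin S -> (1 < size (G j))%N.
Proof.
move=> jS; rewrite ltnNge; apply/negP => /size1_polyC h.
have := G_eval jS; rewrite h hornerC => e.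
case: (hF jS) => _ hPF /eqP; apply; apply: fixP0 => //.
by rewrite -e Phi_coef.
Qed.

Lemma cc_fix j : sigm S (cc j) = cc j.
Proof. by rewrite /cc lead_coefE Phi_coef. Qed.

Lemma cc_nz j : j \notin S -> cc j != 0.
Proof.
move=> jS; rewrite /cc lead_coef_eq0 -size_poly_eq0.
by rewrite -lt0n; apply: ltn_trans (G_size jS).
Qed.

Lemma int_ccX j : j \notin S -> integralOver psi (pi (cc j * 'X_j)).
Proof.
move=> jS; have s2 := G_size jS; set d := (size (G j)).-1.
have d1 : (0 < d)%N by rewrite /d -ltnS prednK // ltnW.
pose M := \poly_(t < d.+1) (if (t < d)%N then (G j)`_t * cc j ^+ (d.-1 - t) else 1).
have sM : size M = d.+1 by rewrite size_poly_eq //= ltnn oner_neq0.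
have mM : M \is monic by rewrite monicE lead_coefE sM coef_poly ltnSn ltnn.
have fM : map_poly (sigm S) M = M.
  apply/polyP => t; rewrite coef_map coef_poly; case: ifP => //= _; last by rewrite rmorph0.
  by case: ifP => _; rewrite ?rmorph1 // rmorphM rmorphXn cc_fix Phi_coef.
have eM : M.[cc j * 'X_j] = cc j ^+ d.-1 * (G j).['X_j].
  rewrite horner_poly big_ord_recr /= ltnn mul1r (horner_coef_wide _ (leqnn _)).
  rewrite -/d -[size (G j)](prednK (ltnW s2)) -/d big_ord_recr /= mulrDr mulr_sumr.
  congr (_ + _).
    apply: eq_bigr => t _; rewrite ltn_ord exprMn.
    have -> : cc j ^+ d.-1 = cc j ^+ (d.-1 - t) * cc j ^+ t.
      by rewrite -exprD subnK // -ltnS prednK.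
    by rewrite !mulrA; congr (_ * _); rewrite -mulrA mulrC.
  rewrite [in RHS]/cc lead_coefE -/d exprMn mulrA -exprSr prednK //.
exists M => //.
have -> : map_poly psi M = map_poly pi M.
  by rewrite -{2}fM -map_poly_comp.
rewrite /root horner_map eM G_eval //; apply/eqP/piD0.
case: (hF jS) => _ hPF _; case: hP => hI _; exact: idealM.
Qed.

Let c := \prod_(j | j \notin S) cc j.
Lemma c_fix : sigm S c = c.
Proof. by rewrite rmorph_prod; apply: eq_bigr => j _; rewrite cc_fix. Qed.
Lemma c_nz : c != 0.
Proof. by apply/prodf_neq0 => j; apply: cc_nz. Qed.
Lemma pi_fix x : sigm S x = x -> integralOver psi (pi x).
Proof. by move=> h; rewrite -h -psiE; apply: integral_id. Qed.
Lemma int_pc N : integralOver psi (pi c ^+ N).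
Proof. by rewrite -rmorphXn; apply: pi_fix; rewrite rmorphXn c_fix. Qed.

Definition Good (z : DD) := exists N, integralOver psi (pi c ^+ N * z).
Lemma Good_add z w : Good z -> Good w -> Good (z + w).
Proof.
move=> [N hz] [M hw]; exists (N + M)%N.
have -> : pi c ^+ (N + M) * (z + w) = pi c ^+ M * (pi c ^+ N * z) + pi c ^+ N * (pi c ^+ M * w).
  by rewrite exprD mulrDr !mulrA [pi c ^+ M * _]mulrC.
apply: integral_add.
  apply: integral_mul; [exact: int_pc | exact: hz].
apply: integral_mul; [exact: int_pc | exact: hw].
Qed.
Lemma Good_mul z w : Good z -> Good w -> Good (z * w).
Proof.
move=> [N hz] [M hw]; exists (N + M)%N.
have -> : pi c ^+ (N + M) * (z * w) = (pi c ^+ N * z) * (pi c ^+ M * w).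
  by rewrite exprD !mulrA; congr (_ * _); rewrite -!mulrA; congr (_ * _); rewrite mulrC.
exact: (integral_mul hz hw).
Qed.
Lemma Good_fix x : sigm S x = x -> Good (pi x).
Proof. by move=> h; exists 0%N; rewrite expr0 mul1r; apply: pi_fix. Qed.
Lemma Good_exp z e : Good z -> Good (z ^+ e).
Proof.
move=> h; elim: e => [|e IH]; first by rewrite expr0 -(rmorph1 pi); apply: Good_fix; rewrite rmorph1.
by rewrite exprS; apply: Good_mul.
Qed.
Lemma Good_X i : Good (pi 'X_i).
Proof.
case iS: (i \in S); first by apply: Good_fix; rewrite sigX iS.
exists 1%N; rewrite expr1 -rmorphM /c (bigD1 i) ?iS //= mulrC mulrA rmorphM.
apply: integral_mul; last by apply: pi_fix; rewrite rmorph_prod; apply: eq_bigr => j _; rewrite cc_fix.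
by rewrite mulrC; apply: int_ccX; rewrite iS.
Qed.
Lemma Good_pi p : Good (pi p).
Proof.
elim/mpolyind: p => [|c0 m p _ _ IH].
  by apply: Good_fix; rewrite rmorph0.
rewrite rmorphD; apply: Good_add; last exact: IH.
rewrite -mul_mpolyC rmorphM; apply: Good_mul; first by apply: Good_fix; rewrite sigC.
rewrite mpolyXE_id rmorph_prod; apply: big_ind.
- by rewrite -(rmorph1 pi); apply: Good_fix; rewrite rmorph1.
- exact: Good_mul.
- by move=> i _; rewrite rmorphXn; apply: Good_exp; apply: Good_X.
Qed.

Lemma key_false : False.
Proof.
have [N hN] := Good_pi q.
set y := pi c ^+ N * pi q.
have ey : y = pi (c ^+ N * q) by rewrite rmorphM rmorphXn.
have Pc : ~ P c.
  by move=> h; have /eqP := c_nz; apply; apply: fixP0 c_fix h.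
have PcN : forall M, ~ P (c ^+ M).
  elim => [|M IH]; first by rewrite expr0; case: hP => _ [].
  by rewrite exprS; case: hP => _ [_ hp] /hp [].
have ynz : y != 0.
  apply/eqP; rewrite ey => /piD0; case: hP => _ [_ hp] /hp []; [exact: PcN | exact: qP].
have smap r : (size (map_poly psi r) <= size r)%N by exact: size_poly.
suff H: forall s p, p \is monic -> root (map_poly psi p) y -> (size p <= s)%N -> False.
  by case: hN => p mp rp; apply: (H (size p) p).
elim => [|s IH] p mp rp sp.
  by move: sp; rewrite leqn0 size_poly_eq0 (negbTE (monic_neq0 mp)).
set d := (size p).-1.
have psz : size p = d.+1 by rewrite prednK // lt0n size_poly_eq0 monic_neq0.
pose p' := \poly_(i < d) p`_i.+1.
have ehp : (map_poly psi p).[y] = psi p`_0 + y * (map_poly psi p').[y].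
  rewrite (horner_coef_wide _ (smap p)) psz big_ord_recl /= coef_map expr0 mulr1.
  congr (_ + _); rewrite (horner_coef_wide _ (leq_trans (smap p') (size_poly _ _))).
  rewrite mulr_sumr; apply: eq_bigr => i _; rewrite !coef_map coef_poly ltn_ord /=.
  by rewrite exprS mulrCA.
move: rp; rewrite /root ehp => /eqP e0.
case: (eqVneq (psi p`_0) 0) => [h0|h0].
  move: e0; rewrite h0 add0r => /D_dom [/eqP|] e1; first by rewrite e1 in ynz.
  have dpos : (0 < d)%N.
    rewrite lt0n; apply/eqP => d0.
    have e : p`_0 = 1 by rewrite -(monicP mp) lead_coefE -/d d0.
    by move: h0; rewrite e rmorph1 => /eqP; rewrite (negbTE (D_nontriv hP)).
  have sp' : size p' = d.
    by rewrite size_poly_eq // prednK // /d -lead_coefE (monicP mp) oner_neq0.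
  have mp' : p' \is monic.
    by rewrite monicE lead_coefE sp' coef_poly prednK ?leqnn // /d -lead_coefE (monicP mp).
  apply: (IH p' mp'); first by rewrite /root e1.
  by rewrite sp'; move: sp; rewrite psz.
case: (piD_surj (map_poly psi p').[y]) => r0 er0.
move: e0; rewrite er0 ey psiE -rmorphM -rmorphD => /piD0 /hPQ hq.
have hq2 : Q (c ^+ N * q * r0).
  case: hQ => hI _; apply: (idealMr hI); apply: (idealM hI); exact: qQ.
have hq3 : Q (sigm S p`_0).
  case: hQ => hI _; have := idealB hI hq hq2; by rewrite addrK.
by move/eqP: h0; apply; rewrite psiE (hS (sig_sub _ (subxx S)) hq3) rmorph0.
Qed.
End KeyLemma.

Section Wrap.
Variables (k : fieldType) (n : nat).
Local Notation R := {mpoly k[n]}.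

Lemma lemma_L (P Q : R -> Prop) (S : {set 'I_n}) :
  is_prime P -> is_prime Q -> rsubsetneq P Q ->
  (forall p, sigm S p = p -> Q p -> p = 0) ->
  exists j, j \notin S /\ forall p, sigm (j |: S) p = p -> P p -> p = 0.
Proof.
move=> hP hQ [hPQ [q [qQ qP]]] hS.
apply: NNPP => hno.
have hF : forall j, exists F, j \notin S -> [/\ sigm (j |: S) F = F, P F & F != 0].
  move=> j; case: (boolP (j \in S)) => jS; first by exists 0.
  apply: NNPP => h2; apply: hno; exists j; split; first exact: jS.
  move=> p h1 h3; apply: NNPP => h4; apply: h2; exists p => _; split; [exact: h1|exact: h3|].
  by apply/eqP.
pose F j := proj1_sig (constructive_indefinite_description _ (hF j)).
apply: (key_false hP hQ hPQ qQ qP hS (F := F)) => j jS.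
exact: (proj2_sig (constructive_indefinite_description _ (hF j)) jS).
Qed.

Lemma chain_bound (T : {set 'I_n}) (m : nat) (ch : nat -> (R -> Prop)) :
  (forall i, (i <= m)%N -> is_prime (ch i)) ->
  (forall i, (i < m)%N -> rsubsetneq (ch i) (ch i.+1)) ->
  (forall p, sigm T p = p -> ch m p -> p = 0) -> (#|T| + m <= n)%N.
Proof.
move=> hp hs hm.
suff H : forall u, (u <= m)%N -> exists S : {set 'I_n},
    #|S| = (#|T| + u)%N /\ forall p, sigm S p = p -> ch (m - u)%N p -> p = 0.
  have [S [hS _]] := H m (leqnn m).
  by rewrite -hS -[X in (_ <= X)%N]card_ord max_card.
elim => [_|u IH um]; first by exists T; split; [rewrite addn0 | rewrite subn0].
have [S [cS hS]] := IH (ltnW um).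
have e : (m - u = (m - u.+1).+1)%N by rewrite subnSK.
rewrite e in hS.
have h1 : (m - u.+1 <= m)%N by lia.
have h2 : ((m - u.+1).+1 <= m)%N by lia.
have h3 : (m - u.+1 < m)%N by lia.
have [j [jS hj]] := lemma_L (hp _ h1) (hp _ h2) (hs _ h3) hS.
exists (j |: S); split; last exact: hj.
by rewrite cardsU1 jS cS addnS.
Qed.
End Wrap.


Section Ker.
Variables (k : fieldType) (n : nat).
Local Notation R := {mpoly k[n]}.
Local Notation I := (edge_ideal_L2 k n).
Definition kerP (T : {set 'I_n}) (p : R) : Prop := sigm T p = 0.

Lemma X_neq0 (i : 'I_n) : ('X_i : R) != 0.
Proof.
apply/eqP => h; have := @mcoeffX n k U_(i) U_(i).
by rewrite h mcoeff0 eqxx => /eqP; rewrite eq_sym oner_eq0.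
Qed.

Lemma ker_prime T : is_prime (kerP T).
Proof.
split; first split.
- by rewrite /kerP rmorph0.
- split.
  + by move=> a b; rewrite /kerP rmorphD => -> ->; rewrite addr0.
  + by move=> r a; rewrite /kerP rmorphM => ->; rewrite mulr0.
- split; first by rewrite /kerP rmorph1; apply/eqP; exact: oner_neq0.
  move=> a b; rewrite /kerP rmorphM => /eqP; rewrite mulf_eq0 => /orP [] /eqP h; [left|right]; exact: h.
Qed.

Lemma kerX T i : kerP T 'X_i <-> i \notin T.
Proof.
rewrite /kerP sigX; case: ifP => iT; split => //.
by move=> h; have := X_neq0 i; rewrite h eqxx.
Qed.

Lemma ker_in (C : {set 'I_n}) (J : R -> Prop) : is_ideal J ->
  (forall i, i \in C -> J 'X_i) -> rsubset (kerP (~: C)) J.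
Proof.
move=> hJ hC p hp.
have H : forall i, i \notin ~: C -> J 'X_i by move=> i; rewrite in_setC negbK; exact: hC.
by have := sig_ideal hJ H p; rewrite (hp : sigm (~: C) p = 0) subr0.
Qed.

Definition vcover (C : {set 'I_n}) := forall i j, L2_edge n i j -> i \in C \/ j \in C.
Definition vmincover C := vcover C /\ forall C' : {set 'I_n}, C' \subset C -> vcover C' -> C \subset C'.

Lemma edge_gen i j : L2_edge n i j -> I ('X_i * 'X_j).
Proof. by move=> e J _ hJ; apply: hJ; exists i, j. Qed.

Lemma edge_sub J : is_ideal J -> (forall i j, L2_edge n i j -> J ('X_i * 'X_j)) -> rsubset I J.
Proof. by move=> hJ h p hp; apply: hp => // q [i [j [e ->]]]; apply: h. Qed.

Lemma ker_edge C : vcover C -> rsubset I (kerP (~: C)).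
Proof.
move=> hC; apply: edge_sub; first exact: (ker_prime _).1.
move=> i j e; rewrite /kerP rmorphM !sigX !in_setC.
by case: (hC i j e) => ->; rewrite ?mul0r ?mulr0.
Qed.

Definition vset (P : R -> Prop) : {set 'I_n} := [set i | Pb P 'X_i].

Lemma prime_cover P : is_prime P -> rsubset I P -> vcover (vset P).
Proof.
move=> [_ [_ hp]] hI i j e; rewrite !inE.
by case: (hp _ _ (hI _ (edge_gen e))) => h; [left|right]; apply/PbP.
Qed.

Lemma minprime_form P : is_minimal_prime I P -> exists C, vmincover C /\ rseteq P (kerP (~: C)).
Proof.
move=> [hP [hIP hmin]].
pose C := vset P.
have cC : vcover C := prime_cover hP hIP.
have sub1 : forall C' : {set 'I_n}, C' \subset C -> rsubset (kerP (~: C')) P.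
  move=> C' sC'; apply: ker_in; first exact: hP.1.
  by move=> i /(subsetP sC'); rewrite inE => /PbP.
have eq1 : forall C' : {set 'I_n}, C' \subset C -> vcover C' -> rseteq (kerP (~: C')) P.
  move=> C' s c; apply: hmin; [exact: ker_prime | exact: ker_edge | exact: sub1].
exists C; split; last first.
  move=> x; have := eq1 C (subxx _) cC x; tauto.
split => // C' s c; apply/subsetP => i iC.
suff h : P 'X_i.
  by have := (kerX _ _).1 ((eq1 C' s c 'X_i).2 h); rewrite in_setC negbK.
by move: iC; rewrite inE => /PbP.
Qed.

Lemma mincover_minprime C : vmincover C -> is_minimal_prime I (kerP (~: C)).
Proof.
move=> [cC mC]; split; first exact: ker_prime.
split; first exact: ker_edge.
move=> Q hQ hIQ hQP.
pose C' := vset Q.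
have sC' : C' \subset C.
  apply/subsetP => i; rewrite inE => /PbP /hQP /(iffLR (kerX _ _)); rewrite in_setC negbK; exact.
have sCC' := mC C' sC' (prime_cover hQ hIQ).
move=> p; split; first exact: hQP.
apply: ker_in; first exact: hQ.1.
by move=> i /(subsetP sCC'); rewrite inE => /PbP.
Qed.
End Ker.

Local Close Scope ring_scope.

Definition inA (n i : nat) : bool :=
  (i %% 5 == 2) || ((n %% 5 == 1) || (n %% 5 == 2)) && (i == n - 1).

Lemma arith_indep n i j : i < n -> j < n -> inA n i -> inA n j -> i < j -> j <= i + 2 -> False.
Proof.
move=> hi hj.
move=> /orP [/eqP a1 | /andP [/orP [/eqP a2|/eqP a2] /eqP a3]];
move=> /orP [/eqP b1 | /andP [/orP [/eqP b2|/eqP b2] /eqP b3]]; lia.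
Qed.

Lemma arith_dom n x : 3 <= n -> x < n -> ~~ inA n x ->
  exists a, [/\ a < n, inA n a, a != x, x <= a + 2 & a <= x + 2].
Proof.
move=> n3 xn hx.
case: (ltnP (5 * (x %/ 5) + 2) n) => h.
  exists (5 * (x %/ 5) + 2); split => //.
  - by rewrite /inA; apply/orP; left; apply/eqP; lia.
  - by apply/eqP => e; move: hx; rewrite -e /inA; apply/negP; rewrite negbK; apply/orP; left; apply/eqP; lia.
  - lia.
  - lia.
exists (n - 1); split.
- lia.
- rewrite /inA; apply/orP; right; rewrite eqxx andbT; apply/orP.
  have : n %% 5 = 1 \/ n %% 5 = 2 by lia.
  by case=> ->; [left|right].
- apply/eqP => e; move: hx; rewrite -e /inA; apply/negP; rewrite negbK; apply/orP; right.
  rewrite eqxx andbT; apply/orP; have : n %% 5 = 1 \/ n %% 5 = 2 by lia.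
  by case=> ->; [left|right].
- lia.
- lia.
Qed.

Lemma cnt_inA n m : m <= n ->
  \sum_(i < m) (inA n i : nat) = (m + 2) %/ 5 + (((n %% 5 == 1) || (n %% 5 == 2)) && (n <= m)).
Proof.
elim: m => [|m IH] mn; first by rewrite big_ord0; case: n mn => [|n'] _; rewrite ?andbF.
rewrite big_ord_recr /= IH ?(ltnW mn) //.
have -> : (n <= m) = false by apply/negbTE; rewrite -ltnNge.
have -> : (n <= m.+1) = (m == n - 1) by apply/idP/eqP; lia.
rewrite /inA.
case: (m %% 5 =P 2) => h1; case: (n %% 5 =P 1) => h2; case: (n %% 5 =P 2) => h3; case: (m =P n - 1) => h4;
  rewrite /= ?andbF ?addn0; lia.
Qed.

Lemma card_inA n : #|[set i : 'I_n | inA n i]| = (n + 2) %/ 5 + ((n %% 5 == 1) || (n %% 5 == 2)).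
Proof.
rewrite -sum1_card big_mkcond /=.
rewrite (eq_bigr (fun i : 'I_n => (inA n i : nat))); last by move=> i _; rewrite inE; case: (inA n i).
by rewrite cnt_inA // leqnn andbT.
Qed.

Lemma exists_mincover n : 3 <= n -> exists C : {set 'I_n}, vmincover C /\ #|C| = n - (n + 4) %/ 5.
Proof.
move=> n3.
pose A := [set i : 'I_n | inA n i].
exists (~: A); split.
  split.
  - move=> i j e; rewrite !inE.
    case Ai: (inA n i); case Aj: (inA n j); [|by right|by left|by left].
    have [ij1 ij2] : i < j /\ j <= i + 2 by move: e; rewrite /L2_edge /=; lia.
    by exfalso; apply: (arith_indep (ltn_ord i) (ltn_ord j) Ai Aj ij1 ij2).
  - move=> C' sC' cC'; apply/subsetP => x; rewrite !inE => xA.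
    have [a [an aA /eqP ax h1 h2]] := arith_dom n3 (ltn_ord x) xA.
    pose a' := Ordinal an.
    have a'C : a' \notin C' by apply/negP => /(subsetP sC'); rewrite !inE aA.
    have e : L2_edge n x a' \/ L2_edge n a' x by rewrite /L2_edge /=; lia.
    case: e => e; case: (cC' _ _ e) => h //; by rewrite h in a'C.
have := cardsC A; rewrite card_ord card_inA.
case: (n %% 5 =P 1) => h1; case: (n %% 5 =P 2) => h2; rewrite /=; move: #|~: A| => t; lia.
Qed.

Lemma dom_of n (C : {set 'I_n}) : vmincover C -> forall x : 'I_n,
  exists a : 'I_n, a \notin C /\ x <= a + 2 /\ a <= x + 2.
Proof.
move=> [cC mC] x.
case xC: (x \in C); last by exists x; rewrite xC; split => //; lia.
apply: NNPP => hno.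
have : vcover (C :\ x).
  move=> i j e; have ij : i != j by apply/eqP => eij; move: e; rewrite /L2_edge eij /=; lia.
  case: (cC i j e) => h.
  - case: (eqVneq i x) => [eix|nix].
      subst i; right; rewrite !inE eq_sym ij /=.
      case jC: (j \in C) => //; exfalso; apply: hno; exists j; rewrite jC; move: e; rewrite /L2_edge /=; lia.
    by left; rewrite !inE nix h.
  - case: (eqVneq j x) => [ejx|njx].
      subst j; left; rewrite !inE ij /=.
      case iC: (i \in C) => //; exfalso; apply: hno; exists i; rewrite iC; move: e; rewrite /L2_edge /=; lia.
    by right; rewrite !inE njx h.
move=> /(mC _ (subD1set C x)) /subsetP /(_ x xC); by rewrite !inE eqxx.
Qed.

Lemma card_nbhd n (a : 'I_n) : \sum_(x : 'I_n) (((x <= a + 2) && (a <= x + 2)) : nat) <= 5.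
Proof.
rewrite (eq_bigr (fun x : 'I_n => if (x <= a + 2) && (a <= x + 2) then 1 else 0)); last by move=> x _; case: ifP.
rewrite -big_mkcond sum1_card cardE -(size_map val).
have -> : 5 = size (iota (a - 2) 5) by rewrite size_iota.
apply: uniq_leq_size; first by rewrite map_inj_uniq ?enum_uniq //; exact: val_inj.
move=> y /mapP [x]; rewrite mem_enum => hx ->; rewrite mem_iota.
move: hx; rewrite ?inE => /andP [h1 h2]; rewrite /=; apply/andP; split; lia.
Qed.

Lemma mincover_card n (C : {set 'I_n}) : vmincover C -> #|C| <= n - (n + 4) %/ 5.
Proof.
move=> mc.
have h2 : \sum_(x : 'I_n) 1 <= \sum_(x : 'I_n) \sum_(a in ~: C) (((x <= a + 2) && (a <= x + 2)) : nat).
  apply: leq_sum => x _; have [a [aC [h h']]] := dom_of mc x.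
  by rewrite (bigD1 a) ?inE //= h h' /= leq_addr.
rewrite exchange_big /= in h2.
have h3 : \sum_(a in ~: C) \sum_(x : 'I_n) (((x <= a + 2) && (a <= x + 2)) : nat) <= \sum_(a in ~: C) 5.
  by apply: leq_sum => a _; apply: card_nbhd.
rewrite sum_nat_const in h3.
have h1 : \sum_(x : 'I_n) 1 = n by rewrite sum1_card card_ord.
have h4 := leq_trans h2 h3; rewrite h1 in h4.
have := cardsC C; rewrite card_ord; move: h4; move: #|C| #|~: C| => u v; lia.
Qed.

Local Open Scope ring_scope.

Section Final.
Variables (k : fieldType) (n : nat).
Local Notation R := {mpoly k[n]}.

Lemma chain_upper (C : {set 'I_n}) (P : R -> Prop) m :
  rseteq P (kerP (~: C)) -> prime_chain_to P m -> (m <= #|C|)%N.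
Proof.
move=> hPC [ch [hp [hs heq]]].
have h : (#|~: C| + m <= n)%N.
  apply: (chain_bound hp hs) => p h1 h2.
  have h3 : sigm (~: C) p = 0 by apply: (hPC p).1; apply: (heq p).1.
  by rewrite -h1.
have := cardsC C; rewrite card_ord; lia.
Qed.

Lemma chain_lower (C : {set 'I_n}) (x0 : 'I_n) :
  prime_chain_to (kerP (k := k) (~: C)) #|C|.
Proof.
pose e := enum C.
have ue : uniq e by apply: enum_uniq.
have se : size e = #|C| by rewrite cardE.
exists (fun t => kerP (k := k) (~: [set x in take t e])); split; first by move=> i _; apply: ker_prime.
split; last first.
  by rewrite -se take_size set_enum.
move=> t ts; split.
  apply: ker_in; first exact: (ker_prime _ _).1.
  move=> i; rewrite inE => hi; apply/(kerX _ _ _).2; rewrite in_setC negbK inE.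
  have ie := mem_take hi; move: hi; rewrite !in_take // => h; exact: ltnW.
exists 'X_(nth x0 e t); split.
  apply/(kerX _ _ _).2; rewrite in_setC negbK inE in_take ?mem_nth ?se //.
  by rewrite index_uniq ?se.
move/(kerX _ _ _).1; rewrite in_setC negbK inE in_take ?mem_nth ?se //.
by rewrite index_uniq ?se ?ltnn.
Qed.
End Final.

Unset Implicit Arguments.
Local Close Scope ring_scope.
Local Close Scope quotient_scope.

Theorem corollary4p5 (k : fieldType) (n : nat) :
  (3 <= n)%N ->
  bigheight_eq (edge_ideal_L2 k n) (n - (n + 4) %/ 5)%N.
Proof.
move=> n3.
have [C0 [mc0 cC0]] := exists_mincover n3.
have x0 : 'I_n by exists 0%N; lia.
split.
  exists (kerP (k := k) (~: C0)); split; first exact: mincover_minprime.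
  rewrite -cC0; split; first exact: chain_lower.
  by move=> m; apply: chain_upper.
move=> P m hmin hc.
have [C [mc hPC]] := minprime_form hmin.
apply: leq_trans (mincover_card mc).
exact: chain_upper hPC hc.
Qed.
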